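(* Let $B$ be a finite nonempty subset of $\mathbb{R}/\mathbb{Z}$ and let $C\subseteq B$ satisfy $C-B=B-B$. For $c\in C$ let $b_c^-$ and $b_c^+$ be the smaller and larger neighbours of $c$ in $B$, and let $R^-=\{c-b_c^-: c\in C\}$ and $R^+=\{c-b_c^+: c\in C\}$. Then every element of $B-B$ is a sum (in $\mathbb{R}/\mathbb{Z}$) of elements of $R^-$, and also a sum of elements of $R^+$; that is, $$B-B\subseteq\langle R^-\rangle_{\mathbb{N}_0}=\langle R^+\rangle_{\mathbb{N}_0}.$$
   Context: $X-Y=\{x-y: x\in X, y\in Y\}$. A finite subset of $\mathbb{R}/\mathbb{Z}$ is ordered circularly (anticlockwise around the circle); each point has a smaller neighbour (the point immediately before it) and a larger neighbour (the point immediately after it) in this circular order, where the first point is regarded as coming after the last. For a set $R\subseteq\mathbb{R}/\mathbb{Z}$, $\langle R\rangle_{\mathbb{N}_0}$ denotes the set of all finite sums $\sum_{r\in R} n_r r$ with $n_r\in\mathbb{N}_0=\{0,1,2,\dots\}$. *)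

(* Defs.v *)
(* R / Z is modelled by canonical representatives in [0,1):
   a point of R/Z is a real x with 0 <= x < 1, and the group operations are
   performed on representatives and reduced with [frac]. *)
From HB Require Import structures.
From mathcomp Require Import all_boot all_order all_algebra.
From mathcomp Require Import reals.
Set Implicit Arguments. Unset Strict Implicit. Unset Printing Implicit Defensive.
Import Order.TTheory GRing.Theory Num.Theory.
Local Open Scope ring_scope.

Section Circle.
Variable R : realType.

Definition frac (x : R) : R := x - (Num.floor x)%:~R.

Definition circle_set (B : seq R) : Prop :=
  uniq B /\ (forall b, b \in B -> 0 <= b < 1).

Definition csub (x y : R) : R := frac (x - y).

Definition diffset (X Y : seq R) (z : R) : Prop :=
  exists2 x, x \in X & exists2 y, y \in Y & z = csub x y.

Definition maxlist (s : seq R) : R := foldr Num.max (head 0 s) s.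
Definition minlist (s : seq R) : R := foldr Num.min (head 0 s) s.

Definition prev_nb (B : seq R) (c : R) : R :=
  let L := [seq b <- B | b < c] in
  if L is [::] then maxlist B else maxlist L.

Definition next_nb (B : seq R) (c : R) : R :=
  let L := [seq b <- B | c < b] in
  if L is [::] then minlist B else minlist L.

Definition nspan (Rs : seq R) (z : R) : Prop :=
  exists n : R -> nat, z = frac (\sum_(r <- undup Rs) (n r)%:R * r).

End Circle.

(* Main.v *)
Require Import Defs.
From HB Require Import structures.
From mathcomp Require Import all_boot all_order all_algebra.
From mathcomp Require Import reals.
From mathcomp Require Import ring lra.
Import Order.TTheory GRing.Theory Num.Theory.
Local Open Scope ring_scope.

Local Notation frac := Defs.frac.
Section Aux.
Variable R : realType.
Implicit Types x y : R.

Lemma frac_itv x : 0 <= frac x < 1.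
Proof.
rewrite /frac; have /andP[h1 h2] := floor_itv x.
rewrite intrD in h2; apply/andP; split; lra.
Qed.

Lemma frac_id x : 0 <= x < 1 -> frac x = x.
Proof.
move=> h; rewrite /frac (@floor_def _ x 0); first by rewrite subr0.
by rewrite add0r.
Qed.

Lemma frac_int x (m : int) : frac (x + m%:~R) = frac x.
Proof.
rewrite /frac floorDrz ?intr_int // intrKfloor intrD; ring.
Qed.

Lemma frac_congr x y (m : int) : x = y + m%:~R -> frac x = frac y.
Proof. by move=> ->; apply: frac_int. Qed.

Lemma frac_addl x y : frac (frac x + y) = frac (x + y).
Proof.
apply: (@frac_congr _ _ (- Num.floor x)); rewrite /frac intrN; ring.
Qed.

Lemma frac_addr x y : frac (x + frac y) = frac (x + y).
Proof. by rewrite addrC frac_addl addrC. Qed.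

Lemma frac_neg x : -1 <= x < 0 -> frac x = x + 1.
Proof.
move=> h; rewrite -(@frac_int x 1) frac_id //; lra.
Qed.

Lemma frac0 : frac 0 = 0 :> R.
Proof. by rewrite frac_id // lexx ltr01. Qed.


Lemma foldr_max_spec (a : R) (s : seq R) :
  let m := foldr Num.max a s in (m \in a :: s) /\ a <= m /\ (forall x, x \in s -> x <= m).
Proof.
elim: s => [|b s [IH1 [IH2 IH3]]] /=; first by split; [rewrite mem_seq1|split].
split; last split.
- case: (leP b (foldr Num.max a s)) => h.
  + by move: IH1; rewrite !inE => /orP[->|->]; rewrite ?orbT.
  + by rewrite !inE eqxx orbT.
- by rewrite le_max IH2 orbT.
- move=> x; rewrite inE => /orP[/eqP ->|/IH3 h]; first by rewrite le_max lexx.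
  by rewrite le_max h orbT.
Qed.

Lemma maxlist_spec (s : seq R) : s != [::] ->
  maxlist s \in s /\ (forall x, x \in s -> x <= maxlist s).
Proof.
case: s => [//|a s] _; rewrite /maxlist /=.
have [h1 [h2 h3]] := foldr_max_spec a (a :: s).
split.
- by move: h1; rewrite /= inE => /orP[/eqP ->|//]; rewrite inE eqxx.
- exact: h3.
Qed.

Lemma foldr_min_spec (a : R) (s : seq R) :
  let m := foldr Num.min a s in (m \in a :: s) /\ m <= a /\ (forall x, x \in s -> m <= x).
Proof.
elim: s => [|b s [IH1 [IH2 IH3]]] /=; first by split; [rewrite mem_seq1|split].
split; last split.
- case: (leP b (foldr Num.min a s)) => _.
  + by rewrite !inE eqxx orbT.
  + by move: IH1; rewrite !inE => /orP[->|->]; rewrite ?orbT.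
- by rewrite ge_min IH2 orbT.
- move=> x; rewrite inE => /orP[/eqP ->|/IH3 h]; first by rewrite ge_min lexx.
  by rewrite ge_min h orbT.
Qed.

Lemma minlist_spec (s : seq R) : s != [::] ->
  minlist s \in s /\ (forall x, x \in s -> minlist s <= x).
Proof.
case: s => [//|a s] _; rewrite /minlist /=.
have [h1 [h2 h3]] := foldr_min_spec a (a :: s).
split.
- by move: h1; rewrite /= inE => /orP[/eqP ->|//]; rewrite inE eqxx.
- exact: h3.
Qed.

Lemma prev_spec (B : seq R) c : B != [::] ->
  let p := prev_nb B c in
  p \in B /\ ((p < c /\ forall b, b \in B -> b < c -> b <= p) \/
              ((forall b, b \in B -> c <= b) /\ forall b, b \in B -> b <= p)).
Proof.
move=> hB /=; rewrite /prev_nb.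
case E: [seq b <- B | b < c] => [|a l].
- have [h1 h2] := maxlist_spec _ hB; split => //; right; split => // b hb.
  rewrite leNgt; apply/negP => hbc.
  have : b \in [seq b <- B | b < c] by rewrite mem_filter hbc hb.
  by rewrite E.
- have hne : [seq b <- B | b < c] != [::] by rewrite E.
  rewrite -E; have [h1 h2] := maxlist_spec _ hne.
  move: h1; rewrite mem_filter => /andP[h1 h1'].
  split => //; left; split => // b hb hbc; apply: h2.
  by rewrite mem_filter hbc hb.
Qed.

Lemma next_spec (B : seq R) c : B != [::] ->
  let q := next_nb B c in
  q \in B /\ ((c < q /\ forall b, b \in B -> c < b -> q <= b) \/
              ((forall b, b \in B -> b <= c) /\ forall b, b \in B -> q <= b)).
Proof.
move=> hB /=; rewrite /next_nb.
case E: [seq b <- B | c < b] => [|a l].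
- have [h1 h2] := minlist_spec _ hB; split => //; right; split => // b hb.
  rewrite leNgt; apply/negP => hbc.
  have : b \in [seq b <- B | c < b] by rewrite mem_filter hbc hb.
  by rewrite E.
- have hne : [seq b <- B | c < b] != [::] by rewrite E.
  rewrite -E; have [h1 h2] := minlist_spec _ hne.
  move: h1; rewrite mem_filter => /andP[h1 h1'].
  split => //; left; split => // b hb hbc; apply: h2.
  by rewrite mem_filter hbc hb.
Qed.


Lemma fracE x : 0 <= x < 1 -> frac x = x.
Proof. exact: frac_id. Qed.

Lemma step_m (y c p : R) : 0 <= y < 1 -> 0 <= c < 1 -> 0 <= p < 1 -> c != y ->
  ((p < c /\ (y < c -> y <= p)) \/ (c <= y /\ y <= p)) ->
  frac (p - y) < frac (c - y).
Proof.
move=> /andP[y0 y1] /andP[c0 c1] /andP[p0 p1] cy hs.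
case: (ltgtP y c) cy => // hyc _.
- case: hs => [[h1 h2]|[h1 h2]]; last lra.
  have h3 := h2 hyc.
  rewrite !fracE; [lra|apply/andP; split; lra|apply/andP; split; lra].
- case: hs => [[h1 h2]|[h1 h2]].
  + rewrite !frac_neg; [lra|apply/andP; split; lra|apply/andP; split; lra].
  + rewrite (@frac_neg (c - y)) ?fracE; [lra|apply/andP; split; lra|apply/andP; split; lra].
Qed.

Lemma step_p (y c q : R) : 0 <= y < 1 -> 0 <= c < 1 -> 0 <= q < 1 -> c != y -> q != y ->
  ((c < q /\ (c < y -> q <= y)) \/ (y <= c /\ q <= y)) ->
  frac (c - y) < frac (q - y).
Proof.
move=> /andP[y0 y1] /andP[c0 c1] /andP[q0 q1] cy qy hs.
have qy' : q < y \/ y < q by case: (ltgtP q y) qy => //; [left|right].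
case: (ltgtP y c) cy => // hyc _.
- case: hs => [[h1 h2]|[h1 h2]].
  + rewrite !fracE; [lra|apply/andP; split; lra|apply/andP; split; lra].
  + case: qy' => hq; last lra.
    rewrite (@frac_neg (q - y)) ?fracE; [lra|apply/andP; split; lra|apply/andP; split; lra].
- case: hs => [[h1 h2]|[h1 h2]]; last lra.
  have h3 := h2 hyc.
  case: qy' => hq; last lra.
  rewrite !frac_neg; [lra|apply/andP; split; lra|apply/andP; split; lra].
Qed.

Lemma count_lt_strict (f : R -> R) (s : seq R) a b : f a < f b -> a \in s ->
  (count (fun e => (f e < f a)%R) s < count (fun e => (f e < f b)%R) s)%N.
Proof.
move=> hab; elim: s => [//|x s IH]; rewrite inE => /orP[/eqP <-|hs] /=.
- rewrite ltxx hab add0n add1n ltnS; apply: sub_count => e /= h.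
  exact: lt_trans h hab.
- have := IH hs.
  case h1: (f x < f a); case h2: (f x < f b) => //=.
  + by rewrite (lt_trans h1 hab) in h2.
  + by move=> h; rewrite add0n add1n ltnS ltnW.
Qed.


Lemma nspan0 (S : seq R) : nspan S 0.
Proof.
exists (fun _ => 0%N); rewrite big1 ?frac0 // => r _; by rewrite mul0r.
Qed.

Lemma nspan_add (S : seq R) a b : nspan S a -> nspan S b -> nspan S (frac (a + b)).
Proof.
move=> [na ->] [nb ->]; exists (fun r => (na r + nb r)%N).
rewrite frac_addl frac_addr; congr frac.
rewrite -big_split /=; apply: eq_bigr => r _; by rewrite natrD mulrDl.
Qed.

Lemma nspan_step (S : seq R) r d z : r \in S -> nspan S d -> z = frac (d + r) -> nspan S z.
Proof.
move=> hr [n ->] ->; exists (fun x => (n x + (x == r))%N).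
rewrite frac_addl; congr frac.
apply/esym; under eq_bigr => x _ do rewrite natrD mulrDl.
rewrite big_split /=; congr (_ + _).
rewrite (bigD1_seq r) ?mem_undup ?undup_uniq //= eqxx mul1r big1 ?addr0 //.
by move=> x /negPf ->; rewrite mul0r.
Qed.

Lemma nspan_mul (S : seq R) a k : nspan S a -> nspan S (frac (k%:R * a)).
Proof.
move=> ha; elim: k => [|k IH]; first by rewrite mul0r frac0; apply: nspan0.
have -> : frac (k.+1%:R * a) = frac (frac (k%:R * a) + a).
  by rewrite frac_addl -[in LHS]addn1 natrD mulrDl mul1r.
exact: nspan_add.
Qed.

Lemma nspan_sum (S s : seq R) (n : R -> nat) : (forall r, r \in s -> nspan S r) ->
  nspan S (frac (\sum_(r <- s) (n r)%:R * r)).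
Proof.
elim: s => [|x s IH] h; first by rewrite big_nil frac0; apply: nspan0.
rewrite big_cons -frac_addl -frac_addr.
apply: nspan_add; first by apply: nspan_mul; apply: h; rewrite inE eqxx.
by apply: IH => r hr; apply: h; rewrite inE hr orbT.
Qed.

End Aux.

Theorem theorem2 (R : realType) (B C : seq R) :
  circle_set B -> B != [::] ->
  {subset C <= B} ->
  (forall z : R, diffset C B z <-> diffset B B z) ->
  let Rm := [seq csub c (prev_nb B c) | c <- C] in
  let Rp := [seq csub c (next_nb B c) | c <- C] in
  (forall z : R, diffset B B z -> nspan Rm z) /\
  (forall z : R, diffset B B z -> nspan Rp z) /\
  (forall z : R, nspan Rm z <-> nspan Rp z).
Proof.
move=> [_ hrng] hBne hCB hCB' Rm Rp.
pose D := [seq csub x y | x <- B, y <- B].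
have inD : forall x y, x \in B -> y \in B -> csub x y \in D.
  by move=> x y hx hy; rewrite /D; apply/allpairsP; exists (x, y).
have P1 : forall k z, diffset B B z ->
    (count (fun e => (e < z)%R) D < k)%N -> nspan Rm z.
  elim=> [//|k IH] z hz hk.
  move: hk; have [c hc [y hy ->]] := (hCB' z).2 hz; move=> hk.
  have hcB := hCB c hc.
  case: (eqVneq c y) => [<-|hcy]; first by rewrite /csub subrr frac0; apply: nspan0.
  have [hp hs] := @prev_spec R B c hBne.
  set p := prev_nb B c in hp hs *.
  have hlt : csub p y < csub c y.
    apply: step_m; rewrite ?hrng //.
    case: hs => [[h1 h2]|[h1 h2]]; [left; split => //; exact: h2|right; split; [exact: h1|exact: h2]].
  apply: (@nspan_step _ _ (csub c p) (csub p y)).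
  - by apply: map_f.
  - apply: IH; first by exists p => //; exists y.
    have := @count_lt_strict _ (fun x => x) D _ _ hlt (inD _ _ hp hy).
    move=> h; rewrite ltnS in hk; exact: (leq_trans h hk).
  - rewrite /csub frac_addl frac_addr; congr frac; ring.
have P2 : forall k z, diffset B B z ->
    (count (fun e => (- e < - z)%R) D < k)%N -> nspan Rp z.
  elim=> [//|k IH] z hz hk.
  move: hk; have [c hc [y hy ->]] := (hCB' z).2 hz; move=> hk.
  have hcB := hCB c hc.
  case: (eqVneq c y) => [<-|hcy]; first by rewrite /csub subrr frac0; apply: nspan0.
  have [hq hs] := @next_spec R B c hBne.
  set q := next_nb B c in hq hs *.
  apply: (@nspan_step _ _ (csub c q) (csub q y)).
  - by apply: map_f.
  - case: (eqVneq q y) => [->|hqy]; first by rewrite /csub subrr frac0; apply: nspan0.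
    have hlt : csub c y < csub q y.
      apply: step_p; rewrite ?hrng //.
      case: hs => [[h1 h2]|[h1 h2]]; [left; split => //; exact: h2|right; split; [exact: h1|exact: h2]].
    apply: IH; first by exists q => //; exists y.
    have hlt' : - csub q y < - csub c y by rewrite ltrN2.
    have := @count_lt_strict _ (fun x => - x) D _ _ hlt' (inD _ _ hq hy).
    move=> h; rewrite ltnS in hk; exact: (leq_trans h hk).
  - rewrite /csub frac_addl frac_addr; congr frac; ring.
have Q1 : forall z, diffset B B z -> nspan Rm z.
  by move=> z hz; apply: (P1 (count (fun e => (e < z)%R) D).+1).
have Q2 : forall z, diffset B B z -> nspan Rp z.
  by move=> z hz; apply: (P2 (count (fun e => (- e < - z)%R) D).+1).
split => //; split => // z; split.
- move=> [n ->]; apply: nspan_sum => r; rewrite mem_undup => /mapP [c hc ->].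
  apply: Q2; exists c; first exact: hCB.
  by exists (prev_nb B c); first by case: (@prev_spec R B c hBne).
- move=> [n ->]; apply: nspan_sum => r; rewrite mem_undup => /mapP [c hc ->].
  apply: Q1; exists c; first exact: hCB.
  by exists (next_nb B c); first by case: (@next_spec R B c hBne).
Qed.
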